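(* Let $f$ be a biderivation of $\mathcal{SV}(0)$, and let $\phi,\psi:\mathcal{SV}(0)\to\mathcal{SV}(0)$ be linear maps and $\rho_1,\rho_2,\rho_3,\theta_1,\theta_2,\theta_3$ linear complex-valued functions on $\mathcal{SV}(0)$ such that for all $x,y$, $$f(x,y)=\sum_{i=1}^3\rho_i(x)D_i(y)+[\phi(x),y]=\sum_{i=1}^3\theta_i(y)D_i(x)+[x,\psi(y)].$$ Let $\lambda\in\mathbb{C}$ be such that $\phi(L_m)-\lambda L_m\in\mathfrak{M}$ and $\psi(L_m)-\lambda L_m\in\mathfrak{M}$ for all $m\in\mathbb{Z}$ (such $\lambda$ exists). Then for every $n\in\mathbb{Z}$ there are $w_0^{(n)},o_0^{(n)}\in\mathbb{C}$ with $$\phi(M_n)=\lambda M_n+w_0^{(n)}M_0,\qquad \psi(M_n)=\lambda M_n+o_0^{(n)}M_0,$$ and moreover $\rho_i(M_n)=\theta_i(M_n)=0$ for $i=1,2,3$ and all $n\in\mathbb{Z}$.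
   Context: $\mathcal{SV}(0)$ is the complex Lie algebra with basis $\{L_i,Y_i,M_i\mid i\in\mathbb{Z}\}$ and brackets $[L_m,L_n]=(m-n)L_{m+n}$, $[L_m,Y_n]=(\frac12 m-n)Y_{m+n}$, $[L_m,M_n]=-nM_{m+n}$, $[Y_m,Y_n]=(m-n)M_{m+n}$, $[Y_m,M_n]=[M_m,M_n]=0$; $\mathfrak{M}=\bigoplus_{i\in\mathbb{Z}}\mathbb{C}M_i$. A biderivation of a Lie algebra $L$ is a bilinear map $f:L\times L\to L$ with $f([x,y],z)=[x,f(y,z)]+[f(x,z),y]$ and $f(x,[y,z])=[f(x,y),z]+[y,f(x,z)]$ for all $x,y,z\in L$. The linear maps $D_1,D_2,D_3$ are defined by $D_1(L_m)=M_m$, $D_1(Y_m)=D_1(M_m)=0$; $D_2(L_m)=mM_m$, $D_2(Y_m)=D_2(M_m)=0$; $D_3(L_m)=0$, $D_3(Y_m)=Y_m$, $D_3(M_m)=2M_m$. *)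

(* Defs.v *)
From HB Require Import structures.
From mathcomp Require Import all_boot all_order all_algebra.
From mathcomp Require Import finmap.
From mathcomp.multinomials Require Import monalg.
Set Implicit Arguments. Unset Strict Implicit. Unset Printing Implicit Defensive.
Import Order.TTheory GRing.Theory Num.Theory.
Local Open Scope ring_scope.

Section SV0.
Variable C : numClosedFieldType.

(* Basis index: (kind, m) with kind 0 = L, 1 = Y, 2 = M. *)
Definition SVidx := ('I_3 * int)%type.

(* SV(0) = the C-vector space with basis {L_m, Y_m, M_m | m in Z}:
   finitely supported functions SVidx -> C. *)
Definition SV := {malg C[SVidx]}.

Definition kL : 'I_3 := @Ordinal 3 0 isT.
Definition kY : 'I_3 := @Ordinal 3 1 isT.
Definition kM : 'I_3 := @Ordinal 3 2 isT.

Definition Lb (m : int) : SV := << (kL, m) >>.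
Definition Yb (m : int) : SV := << (kY, m) >>.
Definition Mb (m : int) : SV := << (kM, m) >>.

Definition lext (g : SVidx -> SV) (x : SV) : SV :=
  \sum_(a <- msupp x) x@_a *: g a.

Definition zc (m : int) : C := m%:~R.

Definition brb (a b : SVidx) : SV :=
  let m := a.2 in let n := b.2 in
  match nat_of_ord a.1, nat_of_ord b.1 with
  | 0, 0 => (zc m - zc n) *: Lb (m + n)
  | 0, 1 => (zc m / 2%:R - zc n) *: Yb (m + n)
  | 0, 2 => (- zc n) *: Mb (m + n)
  | 1, 0 => (zc m - zc n / 2%:R) *: Yb (m + n)     (* [Y_m,L_n] = -[L_n,Y_m] *)
  | 2, 0 => zc m *: Mb (m + n)                     (* [M_m,L_n] = -[L_n,M_m] *)
  | 1, 1 => (zc m - zc n) *: Mb (m + n)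
  | _, _ => 0
  end.

Definition br (x y : SV) : SV := lext (fun a => lext (brb a) y) x.

Definition inMM (x : SV) : Prop := forall a : SVidx, a.1 != kM -> x@_a = 0.

(* D_1, D_2, D_3 (indexed 0,1,2) *)
Definition D1b (a : SVidx) : SV := if a.1 == kL then Mb a.2 else 0.
Definition D2b (a : SVidx) : SV := if a.1 == kL then zc a.2 *: Mb a.2 else 0.
Definition D3b (a : SVidx) : SV :=
  if a.1 == kY then Yb a.2 else if a.1 == kM then 2%:R *: Mb a.2 else 0.

Definition Dmap (i : 'I_3) : SV -> SV :=
  match nat_of_ord i with
  | 0 => lext D1b
  | 1 => lext D2b
  | _ => lext D3b
  end.

Definition is_biderivation (f : SV -> SV -> SV) : Prop :=
  (forall x, linear (f x)) /\ (forall y, linear (fun x => f x y)) /\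
  (forall x y z, f (br x y) z = br x (f y z) + br (f x z) y) /\
  (forall x y z, f x (br y z) = br (f x y) z + br y (f x z)).

End SV0.

(* Main.v *)
Require Import Defs.
From HB Require Import structures.
From mathcomp Require Import all_boot all_order all_algebra.
From mathcomp Require Import finmap.
From mathcomp.multinomials Require Import monalg.
From mathcomp Require Import zify ring.
Import GRing.Theory Num.Theory.
Local Open Scope ring_scope.
Set Implicit Arguments.
Section S.
Variable C : numClosedFieldType.
Implicit Types (x y : SV C) (g : SVidx -> SV C).

Lemma lext_coef g x c : (lext g x)@_c = \sum_(a <- msupp x) x@_a * (g a)@_c.
Proof. rewrite /lext raddf_sum; apply: eq_bigr => a _; exact: mcoeffZ. Qed.

Lemma lextEw g x (d : {fset SVidx}) : (msupp x `<=` d)%fset ->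
  lext g x = \sum_(a <- d) x@_a *: g a.
Proof.
move=> le; rewrite /lext [LHS](big_fset_incl _ le) => //= a ad /mcoeff_outdom ->.
by rewrite scale0r.
Qed.

Lemma lextU g a : lext g << a >> = g a.
Proof. by rewrite (lextEw g _ _ msuppU_le) big_seq_fset1 mcoeffUU scale1r. Qed.

Lemma sum_delta x a0 (F : SVidx -> C) : (forall a, a != a0 -> F a = 0) ->
  \sum_(a <- msupp x) x@_a * F a = x@_a0 * F a0.
Proof.
move=> F0; case: (boolP (a0 \in msupp x)) => h.
  rewrite (big_fsetD1 a0) //= big1_fset ?addr0 // => a.
  by rewrite in_fsetD1 => /andP[ne _] _; rewrite F0 ?mulr0.
rewrite big1_fset; first by rewrite mcoeff_outdom // mul0r.
move=> a ain _; rewrite F0 ?mulr0 //; apply/eqP => e; move: h; by rewrite -e ain.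
Qed.

Lemma coefZU (s : C) a c : (s *: << a >> : SV C)@_c = s * (a == c)%:R.
Proof. by rewrite mcoeffZ mcoeffU. Qed.

Lemma brU_l a y c : (br << a >> y)@_c = \sum_(b <- msupp y) y@_b * (brb C a b)@_c.
Proof. by rewrite /br lextU lext_coef. Qed.

Lemma brU_r x b c : (br x << b >>)@_c = \sum_(a <- msupp x) x@_a * (brb C a b)@_c.
Proof. by rewrite /br lext_coef; apply: eq_bigr => a _; rewrite lextU. Qed.


Lemma coefU a c : (<< a >> : SV C)@_c = (a == c)%:R.
Proof. by rewrite mcoeffU. Qed.

Ltac brsolve k0 :=
  rewrite ?/Lb ?/Yb ?/Mb ?brU_r ?brU_l (sum_delta _ k0);
  [ rewrite /brb /= coefZU eqxx mulr1 ?mulrN //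
  | move=> [[[|[|[|//]]] Hi] k']; rewrite /brb /= ?mcoeff0 ?coefZU ?mulr0 //;
    try (by []);
    rewrite !xpair_eqE ?(inj_eq (addIr _)) ?(inj_eq (addrI _)) /=;
    by move/negbTE->; rewrite mulr0 ].

Ltac brzero :=
  rewrite ?/Lb ?/Yb ?/Mb ?brU_r ?brU_l big1 // => [[[[|[|[|//]]] Hi] k']] _;
  rewrite /brb /= ?mcoeff0 ?coefZU ?mulr0 //.

Lemma br_xL_L x m k : (br x (Lb C m))@_(kL, k + m) = x@_(kL, k) * (zc C k - zc C m).
Proof. brsolve (kL, k). Qed.
Lemma br_xL_Y x m k : (br x (Lb C m))@_(kY, k + m) = x@_(kY, k) * (zc C k - zc C m / 2%:R).
Proof. brsolve (kY, k). Qed.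
Lemma br_xL_M x m k : (br x (Lb C m))@_(kM, k + m) = x@_(kM, k) * zc C k.
Proof. brsolve (kM, k). Qed.
Lemma br_xY_Y x m k : (br x (Yb C m))@_(kY, k + m) = x@_(kL, k) * (zc C k / 2%:R - zc C m).
Proof. brsolve (kL, k). Qed.
Lemma br_xM_L x n j : (br x (Mb C n))@_(kL, j) = 0.
Proof. brzero. Qed.
Lemma br_xM_Y x n j : (br x (Mb C n))@_(kY, j) = 0.
Proof. brzero. Qed.
Lemma br_xM_M x n k : (br x (Mb C n))@_(kM, k + n) = x@_(kL, k) * (- zc C n).
Proof. brsolve (kL, k). Qed.
Lemma br_Ly_L y m k : (br (Lb C m) y)@_(kL, m + k) = y@_(kL, k) * (zc C m - zc C k).
Proof. brsolve (kL, k). Qed.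
Lemma br_Ly_Y y m k : (br (Lb C m) y)@_(kY, m + k) = y@_(kY, k) * (zc C m / 2%:R - zc C k).
Proof. brsolve (kY, k). Qed.
Lemma br_Ly_M y m k : (br (Lb C m) y)@_(kM, m + k) = y@_(kM, k) * (- zc C k).
Proof. brsolve (kM, k). Qed.
Lemma br_My_L y n j : (br (Mb C n) y)@_(kL, j) = 0.
Proof. brzero. Qed.
Lemma br_My_Y y n j : (br (Mb C n) y)@_(kY, j) = 0.
Proof. brzero. Qed.
Lemma br_My_M y n k : (br (Mb C n) y)@_(kM, n + k) = y@_(kL, k) * zc C n.
Proof. brsolve (kL, k). Qed.
Lemma br_Yy_Y y m k : (br (Yb C m) y)@_(kY, m + k) = y@_(kL, k) * (zc C m - zc C k / 2%:R).
Proof. brsolve (kL, k). Qed.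

Lemma sum3 (F : 'I_3 -> SV C) : \sum_(i < 3) F i = F kL + F kY + F kM.
Proof.
rewrite !big_ord_recr big_ord0 /= add0r.
by congr (F _ + F _ + F _); apply: val_inj.
Qed.

Lemma zcD a b : zc C (a + b) = zc C a + zc C b.
Proof. by rewrite /zc rmorphD. Qed.
Lemma zc0 : zc C 0 = 0.
Proof. by rewrite /zc. Qed.
Lemma zc1 : zc C 1 = 1.
Proof. by rewrite /zc. Qed.
Lemma zc_eq0 a : (zc C a == 0) = (a == 0).
Proof. by rewrite /zc intr_eq0. Qed.

Lemma key (n : int) (r1 r2 lam : C) (c T : int -> C) :
  (forall k m, r1 * (m == k + m)%:R + r2 * zc C m * (m == k + m)%:R + c k * zc C k
     = T m * (n == k + m)%:R + lam * (m == k + m - n)%:R * zc C n) ->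
  [/\ r1 = 0, r2 = 0 & forall k, k != 0 -> c k = lam * (k == n)%:R].
Proof.
move=> H.
have aux m : m != n -> r1 + r2 * zc C m = 0.
  move=> mn; have := H 0 m; rewrite add0r eqxx zc0 mulr0 addr0 !mulr1.
  have -> : (n == m) = false by apply/eqP; lia.
  rewrite mulr0 add0r => ->.
  case: (eqVneq n 0) => [->|n0]; first by rewrite zc0 mulr0.
  have -> : (m == m - n) = false by apply/eqP; lia.
  by rewrite mulr0 mul0r.
have h1 := aux (n + 1) ltac:(apply/eqP; lia).
have h2 := aux (n + 2) ltac:(apply/eqP; lia).
have r20 : r2 = 0.
  have : r2 * (zc C (n + 2) - zc C (n + 1)) = 0.
    by rewrite mulrBr -[_ * zc C (n+2)](addKr r1) h2 -[_ * zc C (n+1)](addKr r1) h1; ring.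
  have -> : zc C (n + 2) - zc C (n + 1) = 1.
    have -> : n + 2 = (n + 1) + 1 by lia.
    rewrite [zc C (n + 1 + 1)]zcD zc1; ring.
  by rewrite mulr1.
split => //; first by move: h1; rewrite r20 mul0r addr0.
move=> k k0; have := H k (n + 1 - k).
have -> : (n + 1 - k == k + (n + 1 - k)) = false by apply/eqP; lia.
have -> : (n == k + (n + 1 - k)) = false by apply/eqP; lia.
have -> : (n + 1 - k == k + (n + 1 - k) - n) = (k == n) by apply/eqP/eqP; lia.
rewrite !mulr0 !add0r.
case: (eqVneq k n) k0 => [->|kn] k0 /=.
  rewrite ?eqxx !mulr1 => /eqP; rewrite -subr_eq0 -mulrBl mulf_eq0 subr_eq0 zc_eq0.
  by case/orP => /eqP // e; move: k0; rewrite e eqxx.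
rewrite ?eqxx ?mulr0 mul0r => /eqP; rewrite mulf_eq0 zc_eq0 (negbTE k0) orbF.
by move/eqP.
Qed.

Lemma DL (s : 'I_3 -> C) m c :
  (\sum_(i < 3) s i *: Dmap i (Lb C m))@_c = (s kL + s kY * zc C m) * ((kM, m) == c)%:R.
Proof.
by rewrite sum3 /Dmap /= /Lb !lextU /D1b /D2b /D3b /= scaler0 addr0 scalerA -scalerDl /Mb coefZU.
Qed.

Lemma DY (s : 'I_3 -> C) m c :
  (\sum_(i < 3) s i *: Dmap i (Yb C m))@_c = s kM * ((kY, m) == c)%:R.
Proof.
by rewrite sum3 /Dmap /= /Yb !lextU /D1b /D2b /D3b /= !scaler0 !add0r coefZU.
Qed.

Lemma DM (s : 'I_3 -> C) n c :
  (\sum_(i < 3) s i *: Dmap i (Mb C n))@_c = s kM * 2%:R * ((kM, n) == c)%:R.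
Proof.
by rewrite sum3 /Dmap /= /Mb !lextU /D1b /D2b /D3b /= !scaler0 !add0r scalerA coefZU.
Qed.

Lemma br_My_M' y n j : (br (Mb C n) y)@_(kM, j) = y@_(kL, j - n) * zc C n.
Proof. by have := br_My_M y n (j - n); rewrite addrC subrK. Qed.
Lemma br_xM_M' x n j : (br x (Mb C n))@_(kM, j) = x@_(kL, j - n) * (- zc C n).
Proof. by have := br_xM_M x n (j - n); rewrite subrK. Qed.

Lemma zc2 k : zc C k - zc C (2 * k + 2) / 2%:R = -1.
Proof.
have -> : 2 * k + 2 = k + k + 1 + 1 by lia.
rewrite !zcD zc1; field.
by [].
Qed.
Lemma zc2' k : zc C (2 * k + 2) / 2%:R - zc C k = 1.
Proof. by rewrite -opprB zc2 opprK. Qed.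
Lemma zcS k : zc C k - zc C (k + 1) = -1.
Proof. by rewrite zcD zc1; ring. Qed.
Lemma zcS' k : zc C (k + 1) - zc C k = 1.
Proof. by rewrite zcD zc1; ring. Qed.

Lemma eqML : (kM == kL) = false. Proof. by []. Qed.
Lemma eqMY : (kM == kY) = false. Proof. by []. Qed.
Lemma eqLM : (kL == kM) = false. Proof. by []. Qed.
Lemma eqLY : (kL == kY) = false. Proof. by []. Qed.
Lemma eqYM : (kY == kM) = false. Proof. by []. Qed.
Lemma eqYL : (kY == kL) = false. Proof. by []. Qed.
Definition eqK := (eqML, eqMY, eqLM, eqLY, eqYM, eqYL, andFb, andTb, eqxx).

Lemma coefD (x y : SV C) c : (x + y)@_c = x@_c + y@_c.
Proof. exact: (mcoeffD c x y). Qed.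
Lemma coefB (x y : SV C) c : (x - y)@_c = x@_c - y@_c.
Proof. exact: (raddfB (mcoeff c) x y). Qed.
Lemma coefZM (a : C) (n : int) (c : SVidx) : @mcoeff SVidx C c (a *: Mb C n) = a * ((kM,n)==c)%:R.
Proof. exact: coefZU. Qed.
Lemma coefZL (a : C) (n : int) (c : SVidx) : @mcoeff SVidx C c (a *: Lb C n) = a * ((kL,n)==c)%:R.
Proof. exact: coefZU. Qed.
Lemma coef2 (a b : C) (n m : int) (c : SVidx) :
  (a *: Mb C n + b *: Mb C m : SV C)@_c = a * ((kM,n)==c)%:R + b * ((kM,m)==c)%:R.
Proof. exact: (etrans (coefD _ _ c) (congr2 +%R (coefZM a n c) (coefZM b m c))). Qed.
Lemma malgP' (x y : SV C) : (forall c, x@_c = y@_c) -> x = y.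
Proof. by move/malgP. Qed.

Lemma pLM (a b : int) : ((kL, a) == (kM, b)) = false. Proof. by []. Qed.
Lemma pLY (a b : int) : ((kL, a) == (kY, b)) = false. Proof. by []. Qed.
Lemma pML (a b : int) : ((kM, a) == (kL, b)) = false. Proof. by []. Qed.
Lemma pMY (a b : int) : ((kM, a) == (kY, b)) = false. Proof. by []. Qed.
Lemma pYL (a b : int) : ((kY, a) == (kL, b)) = false. Proof. by []. Qed.
Lemma pYM (a b : int) : ((kY, a) == (kM, b)) = false. Proof. by []. Qed.
Lemma pLL (a b : int) : ((kL, a) == (kL, b)) = (a == b). Proof. by rewrite xpair_eqE eqxx. Qed.
Lemma pYY (a b : int) : ((kY, a) == (kY, b)) = (a == b). Proof. by rewrite xpair_eqE eqxx. Qed.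
Lemma pMM (a b : int) : ((kM, a) == (kM, b)) = (a == b). Proof. by rewrite xpair_eqE eqxx. Qed.
Lemma nF : ((false : nat)%:R : C) = 0. Proof. by []. Qed.
Lemma nT : ((true : nat)%:R : C) = 1. Proof. by []. Qed.
Definition pK := (pLM, pLY, pML, pMY, pYL, pYM, pLL, pYY, pMM, eqxx, nF, nT).

Lemma shapeM (P : SV C) n lam :
  (forall k, P@_(kL, k) = 0) -> (forall k, P@_(kY, k) = 0) ->
  (forall k, k != 0 -> P@_(kM, k) = lam * (k == n)%:R) ->
  P = lam *: Mb C n + (P@_(kM, 0) - lam * (0 == n)%:R) *: Mb C 0.
Proof.
move=> PL PY PM; apply: malgP' => -[i k].
rewrite [RHS]coef2.
case: i => [[|[|[|//]]] Hi].
- have -> : Ordinal Hi = kL by apply: val_inj.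
  by rewrite PL !pK !mulr0 addr0.
- have -> : Ordinal Hi = kY by apply: val_inj.
  by rewrite PY !pK !mulr0 addr0.
- have -> : Ordinal Hi = kM by apply: val_inj.
  case: (eqVneq k 0) => [->|k0].
    rewrite !pK mulr1 [n == 0]eq_sym; ring.
  by rewrite PM // !pK [k == n]eq_sym [0 == k]eq_sym (negbTE k0) nF mulr0 addr0.
Qed.

Lemma coefD2 (A B A' B' : SV C) c : (A + B)@_c = (A' + B')@_c -> A@_c + B@_c = A'@_c + B'@_c.
Proof. by rewrite !coefD. Qed.
Lemma comb4 (u v u' v' a b a' b' : C) :
  u + v = u' + v' -> u = a -> v = b -> u' = a' -> v' = b' -> a + b = a' + b'.
Proof. by move=> e <- <- <- <-. Qed.
Lemma inMM_L (X : SV C) lam m k : inMM (X - lam *: Lb C m) ->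
  X@_(kL, k) = lam * ((kL, m) == (kL, k))%:R.
Proof.
move=> h; have := h (kL, k) isT; rewrite coefB coefZL => /eqP.
by rewrite subr_eq0 => /eqP.
Qed.
Lemma br_Ly_M' y m j : (br (Lb C m) y)@_(kM, j) = y@_(kM, j - m) * (- zc C (j - m)).
Proof. by have := br_Ly_M y m (j - m); rewrite addrC subrK. Qed.
Lemma adaptP (r1 r2 zm b1 pk zk t b2 l b3 zn : C) :
  (r1 + r2 * zm) * b1 + pk * zk = t * b2 + l * b3 * zn ->
  r1 * b1 + r2 * zm * b1 + pk * zk = t * b2 + l * b3 * zn.
Proof. by move=> <-; ring. Qed.
Lemma adaptQ (t1 t2 zm b1 q zk s2 b2 l b3 zn : C) :
  s2 * b2 + l * b3 * (- zn) = (t1 + t2 * zm) * b1 + q * (- zk) ->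
  (- t1) * b1 + (- t2) * zm * b1 + q * zk = (- s2) * b2 + l * b3 * zn.
Proof.
move=> e; apply/eqP; rewrite -subr_eq0; apply/eqP.
have : s2 * b2 + l * b3 * (- zn) - ((t1 + t2 * zm) * b1 + q * (- zk)) = 0 by rewrite e subrr.
move=> <-; ring.
Qed.
End S.
Arguments coefD2 {C A B A' B' c}.
Arguments comb4 {C u v u' v' a b a' b'}.
Arguments inMM_L {C X lam m} k.

Unset Implicit Arguments.

Theorem lemma3p4 (C : numClosedFieldType)
  (f : SV C -> SV C -> SV C)
  (phi psi : {linear SV C -> SV C})
  (rho theta : 'I_3 -> {scalar SV C})
  (lam : C) :
  is_biderivation f ->
  (forall x y, f x y = \sum_(i < 3) rho i x *: Dmap i y + br (phi x) y) ->
  (forall x y, f x y = \sum_(i < 3) theta i y *: Dmap i x + br x (psi y)) ->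
  (forall m : int, inMM (phi (Lb C m) - lam *: Lb C m)) ->
  (forall m : int, inMM (psi (Lb C m) - lam *: Lb C m)) ->
  (forall n : int, exists w o : C,
      phi (Mb C n) = lam *: Mb C n + w *: Mb C 0 /\
      psi (Mb C n) = lam *: Mb C n + o *: Mb C 0) /\
  (forall (i : 'I_3) (n : int), rho i (Mb C n) = 0 /\ theta i (Mb C n) = 0).
Proof.
move=> _ H1 H2 HL HR.
have E x y c := coefD2 (congr1 (fun v : SV C => v@_c) (etrans (esym (H1 x y)) (H2 x y))).
have phiL m k : (phi (Lb C m))@_(kL, k) = lam * ((kL, m) == (kL, k))%:R := inMM_L k (HL m).
have psiL m k : (psi (Lb C m))@_(kL, k) = lam * ((kL, m) == (kL, k))%:R := inMM_L k (HR m).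
have PL n k : (phi (Mb C n))@_(kL, k) = 0.
  have := comb4 (E (Mb C n) (Lb C (k + 1)) (kL, k + (k + 1))) (DL _ _ _ _) (br_xL_L _ _ _) (DM _ _ _ _) (br_My_L _ _ _).
  cbv beta. rewrite !pK !mulr0 ?add0r ?addr0 zcS => /eqP. 
  by rewrite mulrN1 oppr_eq0 => /eqP.
have PY n k : (phi (Mb C n))@_(kY, k) = 0.
  have := comb4 (E (Mb C n) (Lb C (2 * k + 2)) (kY, k + (2 * k + 2))) (DL _ _ _ _) (br_xL_Y _ _ _) (DM _ _ _ _) (br_My_Y _ _ _).
  cbv beta. rewrite !pK !mulr0 ?add0r ?addr0 zc2 => /eqP.
  by rewrite mulrN1 oppr_eq0 => /eqP.
have QL n k : (psi (Mb C n))@_(kL, k) = 0.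
  have := comb4 (E (Lb C (k + 1)) (Mb C n) (kL, (k + 1) + k)) (DM _ _ _ _) (br_xM_L _ _ _) (DL _ _ _ _) (br_Ly_L _ _ _).
  cbv beta. rewrite !pK !mulr0 ?add0r ?addr0 zcS' => /eqP.
  by rewrite mulr1 eq_sym => /eqP.
have QY n k : (psi (Mb C n))@_(kY, k) = 0.
  have := comb4 (E (Lb C (2 * k + 2)) (Mb C n) (kY, (2 * k + 2) + k)) (DM _ _ _ _) (br_xM_Y _ _ _) (DL _ _ _ _) (br_Ly_Y _ _ _).
  cbv beta. rewrite !pK !mulr0 ?add0r ?addr0 zc2' => /eqP.
  by rewrite mulr1 eq_sym => /eqP.
have R3 n : rho kM (Mb C n) = 0.
  have := comb4 (E (Mb C n) (Yb C 0) (kY, 0 + 0)) (DY _ _ _ _) (br_xY_Y _ _ _) (DM _ _ _ _) (br_My_Y _ _ _).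
  cbv beta. rewrite PL addr0 !pK !mulr0 mul0r !addr0.
  by rewrite mulr1.
have T3 n : theta kM (Mb C n) = 0.
  have := comb4 (E (Yb C 0) (Mb C n) (kY, 0 + 0)) (DM _ _ _ _) (br_xM_Y _ _ _) (DY _ _ _ _) (br_Yy_Y _ _ _).
  cbv beta. rewrite QL addr0 !pK !mulr0 mul0r !addr0.
  by rewrite mulr1.
have KP n : [/\ rho kL (Mb C n) = 0, rho kY (Mb C n) = 0 &
    forall k, k != 0 -> (phi (Mb C n))@_(kM, k) = lam * (k == n)%:R].
  apply: (@key C n _ _ lam (fun k => (phi (Mb C n))@_(kM, k)) (fun m => theta kM (Lb C m) * 2%:R)) => k m.
  have := comb4 (E (Mb C n) (Lb C m) (kM, k + m)) (DL _ _ _ _) (br_xL_M _ _ _) (DM _ _ _ _) (br_My_M' _ _ _).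
  cbv beta. rewrite psiL !pK. exact: adaptP.
have KQ n : [/\ - theta kL (Mb C n) = 0, - theta kY (Mb C n) = 0 &
    forall k, k != 0 -> (psi (Mb C n))@_(kM, k) = lam * (k == n)%:R].
  apply: (@key C n _ _ lam (fun k => (psi (Mb C n))@_(kM, k)) (fun m => - (rho kM (Lb C m) * 2%:R))) => k m.
  have := comb4 (E (Lb C m) (Mb C n) (kM, k + m)) (DM _ _ _ _) (br_xM_M' _ _ _) (DL _ _ _ _) (br_Ly_M' _ _ _).
  cbv beta. rewrite addrK phiL !pK. exact: adaptQ.
split => [n | i n].
  have [_ _ PM] := KP n; have [_ _ QM] := KQ n.
  exists ((phi (Mb C n))@_(kM, 0) - lam * (0 == n)%:R), ((psi (Mb C n))@_(kM, 0) - lam * (0 == n)%:R).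
  by split; apply: shapeM.
have [r1 r2 _] := KP n; have [t1 t2 _] := KQ n.
move/eqP: t1; rewrite oppr_eq0 => /eqP t1.
move/eqP: t2; rewrite oppr_eq0 => /eqP t2.
case: i => [[|[|[|//]]] Hi].
- by have -> : Ordinal Hi = kL by apply: val_inj.
- by have -> : Ordinal Hi = kY by apply: val_inj.
- by have -> : Ordinal Hi = kM by apply: val_inj.
Qed.
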